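(* For every $m\in\mathbb{N}_0$, $$\frac{1}{m!}\int_1^{+\infty}\frac{\{x\}^2\log^m x}{x^2}\,\mathrm{d}x=1-(-1)^m+2\sum_{k=0}^{m+1}\frac{(-1)^k\zeta^{(k)}(0)}{k!}-\sum_{k=0}^m\frac{\gamma_k}{k!}.$$
   Context: $\{x\}=x-\lfloor x\rfloor$; $\zeta^{(k)}$ is the $k$-th derivative of the Riemann zeta function; $\gamma_k=\lim_{N\to\infty}\left(\sum_{j=1}^N\frac{\log^k j}{j}-\frac{\log^{k+1}N}{k+1}\right)$ are the Stieltjes constants. *)

(* Defs.v *)
From Stdlib Require Import Reals Arith Factorial.
From Coquelicot Require Import Coquelicot.
Open Scope R_scope.

Definition int_1_inf (f : R -> R) : R :=
  RInt_gen f (at_point 1) (Rbar_locally p_infty).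

(* Riemann zeta function on the real line near s = 0 (s > -1, s <> 1),
   given by its standard (Euler-Maclaurin) analytic continuation:
   zeta(s) = 1/(s-1) + 1/2 + s/12
             - s(s+1)/2 * int_1^oo ({x}^2 - {x} + 1/6) x^(-s-2) dx,
   which agrees with sum_n n^(-s) for s > 1. *)
Definition zeta (s : R) : R :=
  1 / (s - 1) + 1 / 2 + s / 12
  - s * (s + 1) / 2 *
    int_1_inf (fun x => (frac_part x ^ 2 - frac_part x + 1 / 6) * Rpower x (- s - 2)).

(* Stieltjes constants:
   gamma_k = lim_N ( sum_{j=1}^N log^k j / j - log^(k+1) N / (k+1) ).
   The sequence below is indexed by N-1 (N = n+1 >= 1). *)
Definition stieltjes (k : nat) : R :=
  real (Lim_seq (fun n : nat =>
    sum_f_R0 (fun j => ln (INR (j + 1)) ^ k / INR (j + 1)) n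
    - ln (INR (n + 1)) ^ (k + 1) / INR (k + 1))).

(* Main.v *)
Require Import Defs.
From Stdlib Require Import Reals Arith Factorial Lra Lia.
From Coquelicot Require Import Coquelicot.
Open Scope R_scope.

Lemma frac_on (n : nat) x : INR n < x < INR n + 1 -> frac_part x = x - INR n.
Proof.
  intros H. unfold frac_part.
  replace (Int_part x) with (Z.of_nat n). rewrite <- INR_IZR_INZ. ring.
  apply Int_part_spec. rewrite <- INR_IZR_INZ. lra.
Qed.

Lemma exRc (f : R -> R) a b : (forall z, Rmin a b <= z <= Rmax a b -> continuous f z) -> ex_RInt f a b.
Proof. exact (ex_RInt_continuous (V:=R_CompleteNormedModule) f a b). Qed.

Lemma ex_RInt_pw (f : R -> R) :
  (forall n : nat, (1 <= n)%nat -> exists h : R -> R,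
     (forall x, INR n < x < INR n + 1 -> f x = h x) /\
     (forall x, INR n <= x <= INR n + 1 -> continuous h x)) ->
  forall b, 1 <= b -> ex_RInt f 1 b.
Proof.
  intros Hp.
  assert (H : forall k : nat, forall b, 1 <= b <= INR k + 1 -> ex_RInt f 1 b).
  { induction k as [|k IH]; intros b Hb.
    - simpl in Hb. replace b with 1 by lra. apply ex_RInt_point.
    - rewrite S_INR in Hb.
      destruct (Rle_lt_dec b (INR k + 1)) as [Hl|Hl].
      + apply IH; lra.
      + apply ex_RInt_Chasles with (INR k + 1).
        * apply IH. pose proof (pos_INR k). lra.
        * destruct (Hp (S k) ltac:(lia)) as [h [Hh1 Hh2]].
          rewrite S_INR in Hh1, Hh2.
          apply ex_RInt_ext with h.
          { intros x Hx. rewrite Rmin_left in Hx by lra. rewrite Rmax_right in Hx by lra.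
            symmetry. apply Hh1. lra. }
          apply exRc. intros z Hz.
          rewrite Rmin_left in Hz by lra. rewrite Rmax_right in Hz by lra.
          apply Hh2. lra. }
  intros b Hb. destruct (nfloor_ex b) as [k Hk]. lra.
  apply (H k). lra.
Qed.

Lemma exCh1 (f:R->R) a b c : a <= b <= c -> ex_RInt f a c -> ex_RInt f a b.
Proof. exact (ex_RInt_Chasles_1 (V:=R_CompleteNormedModule) f a b c). Qed.
Lemma exCh2 (f:R->R) a b c : a <= b <= c -> ex_RInt f a c -> ex_RInt f b c.
Proof. exact (ex_RInt_Chasles_2 (V:=R_CompleteNormedModule) f a b c). Qed.
Lemma RIntCh (f:R->R) a b c : ex_RInt f a b -> ex_RInt f b c -> RInt f a b + RInt f b c = RInt f a c.
Proof. exact (RInt_Chasles (V:=R_CompleteNormedModule) f a b c). Qed.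

Lemma abs_le_inv x y : Rabs x <= y -> -y <= x <= y.
Proof. unfold Rabs; destruct Rcase_abs; lra. Qed.
Lemma abs_le_intro x y : -y <= x <= y -> Rabs x <= y.
Proof. unfold Rabs; destruct Rcase_abs; lra. Qed.

Definition ilim (f : R -> R) (l : R) :=
  (forall b, 1 <= b -> ex_RInt f 1 b) /\ is_lim (fun b => RInt f 1 b) p_infty l.

Lemma ilim_int f l : ilim f l -> int_1_inf f = l.
Proof.
  intros [H1 H2]. unfold int_1_inf. refine (is_RInt_gen_unique (V:=R_CompleteNormedModule) _ _ _).
  intros P HP. specialize (H2 P HP).
  apply Filter_prod with (fun a => a = 1) (fun b => 1 < b /\ P (RInt f 1 b)).
  - reflexivity.
  - apply filter_and; [exists 1; tauto| exact H2].
  - intros a b Ha [Hb1 Hb2]. subst. exists (RInt f 1 b). split; auto.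
    apply (RInt_correct (V:=R_CompleteNormedModule)). apply H1. lra.
Qed.

Lemma ilim_seq f l : ilim f l -> is_lim_seq (fun n => RInt f 1 (INR n)) l.
Proof.
  intros [_ H]. apply (is_lim_comp_seq (fun b => RInt f 1 b) INR p_infty l H).
  - exists 0%nat. intros. discriminate.
  - apply is_lim_seq_INR.
Qed.

Lemma ilim_ext f g l : (forall x, 1 < x -> f x = g x) -> ilim f l -> ilim g l.
Proof.
  intros He [H1 H2]. split.
  - intros b Hb. apply ex_RInt_ext with f; [|now apply H1].
    intros x Hx. rewrite Rmin_left in Hx by lra. apply He. lra.
  - apply is_lim_ext_loc with (fun b => RInt f 1 b); [|exact H2].
    exists 1. intros b Hb. apply RInt_ext. intros x Hx.
    rewrite Rmin_left in Hx by lra. apply He. lra.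
Qed.

Lemma ilim_plus f g lf lg : ilim f lf -> ilim g lg -> ilim (fun x => f x + g x) (lf + lg).
Proof.
  intros [H1 H2] [H3 H4]. split.
  - intros b Hb. apply (ex_RInt_plus (V:=R_NormedModule) f g); auto.
  - apply is_lim_ext_loc with (fun b => RInt f 1 b + RInt g 1 b).
    + exists 1. intros b Hb. symmetry. apply (RInt_plus (V:=R_CompleteNormedModule) f g); [apply H1|apply H3]; lra.
    + now apply is_lim_plus'.
Qed.

Lemma ilim_scal f a lf : ilim f lf -> ilim (fun x => a * f x) (a * lf).
Proof.
  intros [H1 H2]. split.
  - intros b Hb. apply (ex_RInt_scal (V:=R_NormedModule) f); auto.
  - apply is_lim_ext_loc with (fun b => a * RInt f 1 b).
    + exists 1. intros b Hb. symmetry. apply (RInt_scal (V:=R_CompleteNormedModule) f); apply H1; lra.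
    + now apply (is_lim_scal_l _ a p_infty lf).
Qed.

Lemma ilim_minus f g lf lg : ilim f lf -> ilim g lg -> ilim (fun x => f x - g x) (lf - lg).
Proof.
  intros Hf Hg. apply ilim_ext with (fun x => f x + (-1) * g x).
  - intros; ring.
  - replace (lf - lg) with (lf + (-1) * lg) by ring. apply ilim_plus; auto. now apply ilim_scal.
Qed.

Lemma ilim_derive (P f : R -> R) (L : R) :
  (forall x, 1 <= x -> is_derive P x (f x)) -> (forall x, 1 <= x -> continuous f x) ->
  is_lim P p_infty L -> ilim f (L - P 1).
Proof.
  intros Hd Hc Hl.
  assert (HI : forall b, 1 <= b -> is_RInt f 1 b (P b - P 1)).
  { intros b Hb. apply (is_RInt_derive (V:=R_CompleteNormedModule) P f).
    - intros x Hx. rewrite Rmin_left in Hx by lra. apply Hd. lra.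
    - intros x Hx. rewrite Rmin_left in Hx by lra. apply Hc. lra. }
  split.
  - intros b Hb. eexists. now apply HI.
  - apply is_lim_ext_loc with (fun b => P b - P 1).
    + exists 1. intros b Hb. symmetry. apply is_RInt_unique. apply HI. lra.
    + apply is_lim_minus'; auto. apply is_lim_const.
Qed.

Lemma ball_R (x y e : R) : ball x e y <-> Rabs (y - x) < e.
Proof. reflexivity. Qed.

Lemma ilim_exists (f G : R -> R) lG :
  (forall b, 1 <= b -> ex_RInt f 1 b) -> (forall x, 1 <= x -> Rabs (f x) <= G x) ->
  ilim G lG -> exists l, ilim f l.
Proof.
  intros Hf Hb [HG1 HG2].
  assert (Hc : exists y : R, filterlim (fun b => RInt f 1 b) (Rbar_locally p_infty) (locally y)).
  { apply (proj1 (filterlim_locally_cauchy (U:=R_CompleteSpace) (F:=Rbar_locally p_infty) (fun b => RInt f 1 b))).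
    intros eps.
    assert (HGc : exists y : R, filterlim (fun b => RInt G 1 b) (Rbar_locally p_infty) (locally y))
      by (exists lG; exact HG2).
    destruct (proj2 (filterlim_locally_cauchy (U:=R_CompleteSpace) (F:=Rbar_locally p_infty) (fun b => RInt G 1 b)) HGc eps) as [Q [HQ1 HQ2]].
    exists (fun b => Q b /\ 1 <= b). split.
    - apply filter_and; auto. exists 1. intros; lra.
    - assert (key : forall u v, 1 <= u <= v -> Q u -> Q v -> Rabs (RInt f 1 v - RInt f 1 u) < eps).
      { intros u v Huv Qu Qv.
        specialize (HQ2 u v Qu Qv). rewrite ball_R in HQ2.
        assert (Efu : ex_RInt f u v) by (apply exCh2 with 1; [lra| apply Hf; lra]).
        assert (EGu : ex_RInt G u v) by (apply exCh2 with 1; [lra| apply HG1; lra]).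
        assert (C1 : RInt f 1 v - RInt f 1 u = RInt f u v).
        { rewrite <- (RIntCh f 1 u v). ring.
          apply exCh1 with v; [lra| apply Hf; lra]. exact Efu. }
        assert (C2 : RInt G 1 v - RInt G 1 u = RInt G u v).
        { rewrite <- (RIntCh G 1 u v). ring.
          apply exCh1 with v; [lra| apply HG1; lra]. exact EGu. }
        rewrite C1. rewrite C2 in HQ2.
        assert (L1 : RInt f u v <= RInt G u v).
        { apply RInt_le; auto; try lra. intros x Hx. specialize (Hb x ltac:(lra)).
          apply abs_le_inv in Hb. lra. }
        assert (L2 : RInt (fun x => - G x) u v <= RInt f u v).
        { apply RInt_le; auto; try lra. apply (ex_RInt_opp (V:=R_NormedModule)); auto.
          intros x Hx. specialize (Hb x ltac:(lra)).
          apply abs_le_inv in Hb. lra. }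
        rewrite (RInt_opp (V:=R_CompleteNormedModule)) in L2 by auto.
        change (opp (RInt G u v)) with (- RInt G u v) in L2.
        pose proof (Rle_abs (RInt G u v)).
        unfold Rabs at 1; destruct Rcase_abs; lra. }
      intros u v [Qu Hu] [Qv Hv]. rewrite ball_R.
      destruct (Rle_lt_dec u v).
      + apply key; auto.
      + rewrite Rabs_minus_sym. apply key; auto; lra. }
  destruct Hc as [y Hy]. exists y. split; auto.
Qed.

Lemma exp_pow_nat y (k : nat) : exp (INR k * y) = exp y ^ k.
Proof.
  induction k as [|k IH]. simpl. rewrite Rmult_0_l; apply exp_0.
  rewrite S_INR, Rmult_plus_distr_r, Rmult_1_l, exp_plus, IH. simpl. ring.
Qed.

Lemma exp_ge_id y : 0 <= y -> y <= exp y.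
Proof.
  intros H. destruct (Req_dec y 0) as [->|H0]. rewrite exp_0; lra.
  pose proof (exp_ineq1 y ltac:(lra)). lra.
Qed.

Lemma lim_texp eps (n : nat) : 0 < eps -> is_lim (fun t => exp (-eps * t) * t ^ n) p_infty 0.
Proof.
  intros He.
  set (K := (INR (S n) / eps) ^ (S n)).
  apply is_lim_le_le_loc with (f := fun _ => 0) (g := fun t => K * / t).
  - exists 1. intros t Ht. split.
    + apply Rmult_le_pos. left; apply exp_pos. apply pow_le; lra.
    + set (y := eps * t / INR (S n)).
      assert (HS : 0 < INR (S n)) by (apply lt_0_INR; lia).
      assert (Hy : 0 <= y) by (unfold y; apply Rmult_le_pos; [nra| left; now apply Rinv_0_lt_compat]).
      assert (E1 : exp (eps * t) = exp y ^ (S n)).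
      { rewrite <- exp_pow_nat. f_equal. unfold y. field. lra. }
      assert (E2 : y ^ S n <= exp y ^ S n).
      { apply pow_incr. split; auto. now apply exp_ge_id. }
      assert (E3 : exp (- eps * t) = / exp (eps * t)).
      { rewrite <- exp_Ropp. f_equal; ring. }
      rewrite E3, E1.
      assert (Hyp : 0 < y) by (unfold y; apply Rmult_lt_0_compat; [nra| now apply Rinv_0_lt_compat]).
      assert (HyS : 0 < y ^ S n) by (apply pow_lt; lra).
      apply Rle_trans with (/ y ^ S n * t ^ n).
      * apply Rmult_le_compat_r. apply pow_le; lra.
        apply Rinv_le_contravar; auto.
      * right. set (q := eps / INR (S n)).
        assert (Hq : 0 < q) by (unfold q; apply Rdiv_lt_0_compat; lra).
        replace y with (t * q) by (unfold y, q; field; lra).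
        unfold K. replace (INR (S n) / eps) with (/ q) by (unfold q; field; lra).
        rewrite Rpow_mult_distr, pow_inv. simpl (t ^ S n).
        assert (t ^ n <> 0) by (apply pow_nonzero; lra).
        assert (q ^ n <> 0) by (apply pow_nonzero; lra).
        simpl (q ^ S n). field. repeat split; lra.
  - apply is_lim_const.
  - replace (Finite 0) with (Rbar_mult K (Rbar_inv p_infty)) by (simpl; f_equal; ring).
    apply is_lim_scal_l. apply is_lim_inv. apply is_lim_id. discriminate.
Qed.

Lemma lim_explog eps (n : nat) : 0 < eps -> is_lim (fun x => exp (-eps * ln x) * ln x ^ n) p_infty 0.
Proof.
  intros He.
  apply (is_lim_comp (fun t => exp (-eps * t) * t ^ n) ln p_infty 0 p_infty).
  - now apply lim_texp.
  - apply is_lim_ln_p.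
  - exists 0. intros; discriminate.
Qed.

Fixpoint Pc (c : R) (j : nat) (x : R) : R :=
  match j with
  | O => - exp ((1 - c) * ln x) / (c - 1)
  | S j' => INR (S j') / (c - 1) * Pc c j' x - exp ((1 - c) * ln x) * ln x ^ (S j') / (c - 1)
  end.

Lemma exp1c c x : 0 < x -> exp ((1 - c) * ln x) = x * exp (- c * ln x).
Proof.
  intros Hx. replace ((1 - c) * ln x) with (ln x + - c * ln x) by ring.
  rewrite exp_plus, exp_ln; auto.
Qed.

Lemma is_derive_eqv (f : R -> R) x l1 l2 : is_derive f x l1 -> l1 = l2 -> is_derive f x l2.
Proof. intros H ->; exact H. Qed.

Lemma Pc_deriv c j x : 1 < c -> 0 < x -> is_derive (Pc c j) x (ln x ^ j * exp (- c * ln x)).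
Proof.
  intros Hc Hx. induction j as [|j IH].
  - simpl. auto_derive. lra. rewrite exp1c by lra. field. lra.
  - change (Pc c (S j)) with (fun x => INR (S j) / (c - 1) * Pc c j x - exp ((1 - c) * ln x) * ln x ^ (S j) / (c - 1)).
    assert (Hd : is_derive (fun x => exp ((1 - c) * ln x) * ln x ^ (S j) / (c - 1)) x
      (((1 - c) * (1 * / x) * exp ((1 - c) * ln x) * ln x ^ S j +
       exp ((1 - c) * ln x) * (1 * / x * (INR (S j) * ln x ^ j))) / (c - 1))).
    { auto_derive. lra. reflexivity. }
    pose proof (is_derive_minus _ _ x _ _ (is_derive_scal (Pc c j) x (INR (S j)/(c-1)) _ IH) Hd) as H2.
    apply (is_derive_eqv _ _ _ _ (is_derive_ext _ _ _ _ (fun t => eq_refl) H2)).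
    rewrite exp1c by lra. unfold minus, plus, opp; simpl.
    field. lra.
Qed.

Lemma lim_scal_fin (f : R -> R) a (l : R) : is_lim f p_infty l -> is_lim (fun x => a * f x) p_infty (a * l).
Proof. intros H. apply (is_lim_scal_l f a p_infty l H). Qed.

Lemma Pc_lim c j : 1 < c -> is_lim (Pc c j) p_infty 0.
Proof.
  intros Hc. induction j as [|j IH].
  - apply is_lim_ext with (fun x => (- / (c - 1)) * (exp (- (c - 1) * ln x) * ln x ^ 0)).
    { intros x. simpl. replace (- (c - 1) * ln x) with ((1 - c) * ln x) by ring. field. lra. }
    replace 0 with (- / (c - 1) * 0) by ring. apply lim_scal_fin. apply lim_explog. lra.
  - apply is_lim_ext with (fun x => INR (S j) / (c - 1) * Pc c j x + (- / (c - 1)) * (exp (- (c - 1) * ln x) * ln x ^ (S j))).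
    { intros x. change (Pc c (S j) x) with (INR (S j) / (c - 1) * Pc c j x - exp ((1 - c) * ln x) * ln x ^ (S j) / (c - 1)).
      replace (- (c - 1) * ln x) with ((1 - c) * ln x) by ring. field. lra. }
    replace 0 with (INR (S j) / (c - 1) * 0 + - / (c - 1) * 0) by ring.
    apply is_lim_plus'; apply lim_scal_fin; auto. apply lim_explog. lra.
Qed.

Lemma Pc_1 c j : 1 < c -> Pc c j 1 = - INR (fact j) / (c - 1) ^ (S j).
Proof.
  intros Hc. induction j as [|j IH].
  - simpl. rewrite ln_1, Rmult_0_r, exp_0. field. lra.
  - change (Pc c (S j) 1) with (INR (S j) / (c - 1) * Pc c j 1 - exp ((1 - c) * ln 1) * ln 1 ^ (S j) / (c - 1)).
    rewrite IH, ln_1. change (fact (S j)) with (S j * fact j)%nat. rewrite mult_INR.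
    assert ((c - 1) ^ S j <> 0) by (apply pow_nonzero; lra).
    rewrite pow_i by lia. replace ((c - 1) ^ S (S j)) with ((c - 1) * (c - 1) ^ S j) by (simpl; ring).
    field. split; lra.
Qed.

Lemma cont_of_derive (f : R -> R) x : ex_derive f x -> continuous f x.
Proof. exact (ex_derive_continuous (K:=R_AbsRing) (V:=R_NormedModule) f x). Qed.

Lemma ilim_powlog c j : 1 < c ->
  ilim (fun x => ln x ^ j * exp (- c * ln x)) (INR (fact j) / (c - 1) ^ (S j)).
Proof.
  intros Hc. replace (INR (fact j) / (c - 1) ^ (S j)) with (0 - Pc c j 1) by (rewrite Pc_1; auto; field; apply pow_nonzero; lra).
  apply ilim_derive.
  - intros x Hx. apply Pc_deriv; lra.
  - intros x Hx. apply cont_of_derive. auto_derive. lra.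
  - now apply Pc_lim.
Qed.

Lemma contR_mult (f g : R -> R) x : continuous f x -> continuous g x -> continuous (fun y => f y * g y) x.
Proof. exact (continuous_mult (K:=R_AbsRing) f g x). Qed.
Lemma contR_comp (f g : R -> R) x : continuous f x -> continuous g (f x) -> continuous (fun y => g (f y)) x.
Proof. exact (continuous_comp (U:=R_UniformSpace) (V:=R_UniformSpace) (W:=R_UniformSpace) f g x). Qed.

Lemma exp_m2 x : 0 < x -> exp (-2 * ln x) = / x ^ 2.
Proof.
  intros Hx. replace (-2 * ln x) with (- (ln x + ln x)) by ring.
  rewrite exp_Ropp, exp_plus, exp_ln by auto. simpl. f_equal; ring.
Qed.

Lemma ex_frac (phi psi : R -> R) :
  (forall y, continuous phi y) -> (forall x, 0 < x -> continuous psi x) ->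
  forall b, 1 <= b -> ex_RInt (fun x => phi (frac_part x) * psi x) 1 b.
Proof.
  intros Hphi Hpsi. apply ex_RInt_pw. intros n Hn.
  exists (fun x => phi (x - INR n) * psi x). split.
  - intros x Hx. rewrite (frac_on n x Hx). reflexivity.
  - intros x Hx. apply contR_mult.
    + apply contR_comp; [|apply Hphi]. apply cont_of_derive. auto_derive. auto.
    + apply Hpsi. apply le_INR in Hn. simpl in Hn. lra.
Qed.

Lemma frac_bnd x : 0 <= frac_part x < 1.
Proof. destruct (base_fp x). lra. Qed.

Lemma ilim_unique f l1 l2 : ilim f l1 -> ilim f l2 -> l1 = l2.
Proof. intros H1 H2. rewrite <- (ilim_int f l1), <- (ilim_int f l2); auto. Qed.

Lemma ilim_abs_le (f G : R -> R) l lG :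
  (forall x, 1 <= x -> Rabs (f x) <= G x) -> ilim f l -> ilim G lG -> Rabs l <= lG.
Proof.
  intros Hb Hf HG.
  assert (Hf' := ilim_seq _ _ Hf). assert (HG' := ilim_seq _ _ HG).
  destruct Hf as [Hf _]. destruct HG as [HGe _].
  assert (K : forall n : nat, (1 <= n)%nat -> - RInt G 1 (INR n) <= RInt f 1 (INR n) <= RInt G 1 (INR n)).
  { intros n Hn. apply le_INR in Hn. simpl in Hn.
    assert (L1 : RInt f 1 (INR n) <= RInt G 1 (INR n)).
    { apply RInt_le; auto. intros x Hx. specialize (Hb x ltac:(lra)). apply abs_le_inv in Hb. lra. }
    assert (L2 : RInt (fun x => - G x) 1 (INR n) <= RInt f 1 (INR n)).
    { apply RInt_le; auto. apply (ex_RInt_opp (V:=R_NormedModule)); auto.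
      intros x Hx. specialize (Hb x ltac:(lra)). apply abs_le_inv in Hb. lra. }
    rewrite (RInt_opp (V:=R_CompleteNormedModule)) in L2 by auto.
    change (opp (RInt G 1 (INR n))) with (- RInt G 1 (INR n)) in L2. lra. }
  apply abs_le_intro. split.
  - assert (H := is_lim_seq_le_loc (fun n => - RInt G 1 (INR n)) (fun n => RInt f 1 (INR n)) (- lG) l).
    simpl in H. apply H. exists 1%nat. intros n Hn. apply K; auto.
    apply (is_lim_seq_opp _ lG) in HG'. exact HG'. exact Hf'.
  - assert (H := is_lim_seq_le_loc (fun n => RInt f 1 (INR n)) (fun n => RInt G 1 (INR n)) l lG).
    simpl in H. apply H; auto. exists 1%nat. intros n Hn. apply K; auto.
Qed.

Lemma ilim_frac_exists (phi : R -> R) K k :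
  (forall y, continuous phi y) -> (forall y, 0 <= y < 1 -> Rabs (phi y) <= K) ->
  exists l, ilim (fun x => phi (frac_part x) * (ln x ^ k / x ^ 2)) l.
Proof.
  intros Hc Hb.
  apply ilim_exists with (fun x => K * (ln x ^ k * exp (- 2 * ln x))) (K * (INR (fact k) / (2 - 1) ^ S k)).
  - apply ex_frac; auto. intros x Hx. apply cont_of_derive. auto_derive. repeat split; nra.
  - intros x Hx. rewrite Rabs_mult.
    assert (0 <= ln x) by (rewrite <- ln_1; apply ln_le; lra).
    rewrite (Rabs_right (ln x ^ k / x ^ 2)).
    + rewrite exp_m2 in * by lra. unfold Rdiv. rewrite (Rmult_comm K).
      rewrite (Rmult_comm (Rabs _)). apply Rmult_le_compat_l.
      apply Rmult_le_pos. apply pow_le; auto. left; apply Rinv_0_lt_compat, pow_lt; lra.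
      apply Hb, frac_bnd.
    + apply Rle_ge. unfold Rdiv. apply Rmult_le_pos. apply pow_le; auto.
      left; apply Rinv_0_lt_compat, pow_lt; lra.
  - apply ilim_scal. apply ilim_powlog. lra.
Qed.

Lemma exp_le x y : x <= y -> exp x <= exp y.
Proof. intros [H|H]. left; now apply exp_increasing. subst; lra. Qed.

Lemma Dn_exp k t : Derive_n exp k t = exp t.
Proof.
  revert t. induction k as [|k IH]; intros t. reflexivity.
  simpl. rewrite (Derive_ext _ _ t IH). apply is_derive_unique. apply (is_derive_eqv exp t (exp t)); [|reflexivity].
  auto_derive; auto. ring.
Qed.

Lemma Dn_expm k t : Derive_n (fun t => exp (- t)) k t = (-1) ^ k * exp (- t).
Proof.
  revert t. induction k as [|k IH]; intros t. simpl; ring.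
  simpl. rewrite (Derive_ext _ _ t IH). apply is_derive_unique.
  auto_derive; auto. ring.
Qed.

Lemma exDn_exp k t : ex_derive_n exp k t.
Proof.
  destruct k as [|k]. exact I. simpl. apply ex_derive_ext with exp.
  intros; symmetry; apply Dn_exp. auto_derive; auto.
Qed.

Lemma exDn_expm k t : ex_derive_n (fun t => exp (- t)) k t.
Proof.
  destruct k as [|k]. exact I. simpl. apply ex_derive_ext with (fun t => (-1) ^ k * exp (- t)).
  intros; symmetry; apply Dn_expm. auto_derive; auto.
Qed.

Lemma sum_zero_pow K : sum_f_R0 (fun k => 0 ^ k / INR (fact k)) K = 1.
Proof.
  induction K as [|K IH]. simpl. field.
  cbn [sum_f_R0]. rewrite IH. replace (0 ^ S K) with 0 by (simpl; ring). field. apply INR_fact_neq_0.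
Qed.

Lemma exp_rem y K :
  Rabs (exp y - sum_f_R0 (fun k => y ^ k / INR (fact k)) K) <= Rabs y ^ S K / INR (fact (S K)) * exp (Rabs y).
Proof.
  assert (Hf : 0 < INR (fact (S K))) by apply INR_fact_lt_0.
  destruct (Rtotal_order y 0) as [Hy|[Hy|Hy]].
  - destruct (Taylor_Lagrange (fun t => exp (- t)) K 0 (- y) ltac:(lra)) as [z [Hz E]].
    { intros; apply exDn_expm. }
    rewrite Ropp_involutive in E.
    assert (HS : sum_f_R0 (fun m => (- y - 0) ^ m / INR (fact m) * Derive_n (fun t => exp (- t)) m 0) K =
                sum_f_R0 (fun k => y ^ k / INR (fact k)) K).
    { apply sum_eq. intros i _. rewrite Dn_expm, Ropp_0, exp_0.
      replace (- y - 0) with ((-1) * y) by ring. rewrite Rpow_mult_distr.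
      assert (H1 : (-1) ^ i * (-1) ^ i = 1).
      { rewrite <- Rpow_mult_distr. replace (-1 * -1) with 1 by ring. apply pow1. }
      transitivity ((-1) ^ i * (-1) ^ i * (y ^ i / INR (fact i))).
      field. apply INR_fact_neq_0. rewrite H1; ring. }
    rewrite HS in E. rewrite E. rewrite Dn_expm. rewrite Rminus_0_r.
    set (B := (- y) ^ S K / INR (fact (S K)) * ((-1) ^ S K * exp (- z))).
    set (A := sum_f_R0 (fun k : nat => y ^ k / INR (fact k)) K).
    replace (A + B - A) with B by ring. unfold B.
    rewrite Rabs_mult, Rabs_mult, pow_1_abs, Rmult_1_l.
    rewrite (Rabs_right (exp (- z))) by (left; apply exp_pos).
    unfold Rdiv. rewrite Rabs_mult, Rabs_Rinv by lra. rewrite <- RPow_abs.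
    rewrite Rabs_Ropp. rewrite (Rabs_right (INR _)) by lra.
    apply Rmult_le_compat_l. apply Rmult_le_pos. apply pow_le, Rabs_pos. left; apply Rinv_0_lt_compat; lra.
    apply exp_le. pose proof (Rabs_pos y). lra.
  - subst. rewrite sum_zero_pow, exp_0, Rabs_R0, pow_i by lia. rewrite Rminus_diag, Rabs_R0. lra.
  - destruct (Taylor_Lagrange exp K 0 y Hy) as [z [Hz E]].
    { intros; apply exDn_exp. }
    assert (HS : sum_f_R0 (fun m => (y - 0) ^ m / INR (fact m) * Derive_n exp m 0) K =
                sum_f_R0 (fun k => y ^ k / INR (fact k)) K).
    { apply sum_eq. intros i _. rewrite Dn_exp, exp_0, Rminus_0_r. ring. }
    rewrite HS in E. rewrite E. rewrite Dn_exp, Rminus_0_r.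
    set (B := y ^ S K / INR (fact (S K)) * exp z).
    set (A := sum_f_R0 (fun k : nat => y ^ k / INR (fact k)) K).
    replace (A + B - A) with B by ring. unfold B.
    rewrite Rabs_right. rewrite Rabs_right by lra.
    apply Rmult_le_compat_l. apply Rmult_le_pos. apply pow_le; lra. left; apply Rinv_0_lt_compat; lra.
    apply exp_le. lra.
    apply Rle_ge. apply Rmult_le_pos. apply Rmult_le_pos. apply pow_le; lra. left; apply Rinv_0_lt_compat; lra.
    left; apply exp_pos.
Qed.

Ltac toR := match goal with |- ?a = ?b => change (@eq R a b) end.

Definition IC (m : nat) (x : R) := frac_part x * (ln x ^ m / x ^ 2).
Definition Qm (m : nat) (x : R) := ln x ^ (S m) / INR (S m).

Lemma Pc2_closed j x : 0 < x -> Pc 2 j x = - INR (fact j) / x * sum_f_R0 (fun i => ln x ^ i / INR (fact i)) j.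
Proof.
  intros Hx. assert (E : exp ((1 - 2) * ln x) = / x).
  { replace ((1 - 2) * ln x) with (- ln x) by ring. rewrite exp_Ropp, exp_ln; auto. }
  induction j as [|j IH].
  - simpl. rewrite E. field. lra.
  - change (Pc 2 (S j) x) with (INR (S j) / (2 - 1) * Pc 2 j x - exp ((1 - 2) * ln x) * ln x ^ (S j) / (2 - 1)).
    rewrite IH, E. cbn [sum_f_R0]. change (fact (S j)) with (S j * fact j)%nat. rewrite mult_INR.
    assert (INR (fact j) <> 0) by apply INR_fact_neq_0.
    assert (INR (S j) <> 0) by (apply not_0_INR; lia).
    field. repeat split; auto. lra.
Qed.

Lemma IC_piece m (n : nat) : (1 <= n)%nat ->
  RInt (IC m) (INR n) (INR n + 1) =
  (Qm m (INR n + 1) - INR n * Pc 2 m (INR n + 1)) - (Qm m (INR n) - INR n * Pc 2 m (INR n)).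
Proof.
  intros Hn. apply le_INR in Hn. simpl in Hn.
  rewrite (RInt_ext (V:=R_CompleteNormedModule) (IC m) (fun x => (x - INR n) * (ln x ^ m / x ^ 2))).
  2: { intros x Hx. rewrite Rmin_left in Hx by lra. rewrite Rmax_right in Hx by lra.
       unfold IC. rewrite (frac_on n x Hx). reflexivity. }
  apply is_RInt_unique.
  apply (is_RInt_derive (V:=R_CompleteNormedModule) (fun x => Qm m x - INR n * Pc 2 m x)).
  - intros x Hx. rewrite Rmin_left in Hx by lra. rewrite Rmax_right in Hx by lra.
    assert (HQ : is_derive (Qm m) x (ln x ^ m / x)).
    { unfold Qm. eapply is_derive_eqv. { auto_derive. lra. reflexivity. }
      change (match m with 0%nat => 1 | S _ => INR m + 1 end) with (INR (S m)).
      simpl pred. assert (INR (S m) <> 0) by (apply not_0_INR; lia).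
      match goal with |- ?a = ?b => change (@eq R a b) end. field. lra. }
    pose proof (is_derive_minus _ _ x _ _ HQ (is_derive_scal (Pc 2 m) x (INR n) _ (Pc_deriv 2 m x ltac:(lra) ltac:(lra)))) as H2.
    apply (is_derive_eqv _ _ _ _ (is_derive_ext _ _ _ _ (fun t => eq_refl) H2)).
    rewrite exp_m2 by lra. unfold minus, plus, opp; simpl. field. lra.
  - intros x Hx. rewrite Rmin_left in Hx by lra. rewrite Rmax_right in Hx by lra.
    apply cont_of_derive. auto_derive. repeat split; nra.
Qed.

Lemma ex_IC m b : 1 <= b -> ex_RInt (IC m) 1 b.
Proof.
  intros Hb. apply (ex_frac (fun y => y) (fun x => ln x ^ m / x ^ 2)); auto.
  - intros; apply continuous_id.
  - intros x Hx. apply cont_of_derive. auto_derive. repeat split; nra.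
Qed.

Lemma INR_ge1 k : (1 <= k)%nat -> 1 <= INR k.
Proof. intros H; apply le_INR in H; simpl in H; lra. Qed.

Lemma RInt_IC m n :
  RInt (IC m) 1 (INR (S n)) =
  Qm m (INR (S n)) - INR (S n) * Pc 2 m (INR (S n)) + sum_f_R0 (fun i => Pc 2 m (INR (S i))) n.
Proof.
  induction n as [|n IH].
  - simpl. rewrite (RInt_point 1 (IC m)). unfold Qm. rewrite ln_1. rewrite pow_i by lia.
    change (@zero R_CompleteNormedModule) with 0. field. apply not_0_INR; lia.
  - rewrite <- (RIntCh (IC m) 1 (INR (S n)) (INR (S (S n)))).
    2: apply ex_IC; apply INR_ge1; lia.
    2: { apply exCh2 with 1. split; [apply INR_ge1; lia | apply le_INR; lia]. apply ex_IC. apply INR_ge1; lia. }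
    rewrite IH. cbn [sum_f_R0]. rewrite (S_INR (S n)). rewrite IC_piece by lia.
    toR. ring.
Qed.

Definition Ssum (k n : nat) := sum_f_R0 (fun j => ln (INR (j + 1)) ^ k / INR (j + 1)) n.
Definition stseq (k n : nat) := Ssum k n - ln (INR (n + 1)) ^ (k + 1) / INR (k + 1).

Lemma sum_swap (a : nat -> nat -> R) N M :
  sum_f_R0 (fun i => sum_f_R0 (fun k => a i k) M) N = sum_f_R0 (fun k => sum_f_R0 (fun i => a i k) N) M.
Proof.
  induction N as [|N IH]. reflexivity.
  cbn [sum_f_R0]. rewrite IH. rewrite <- plus_sum. apply sum_eq. intros; reflexivity.
Qed.

Lemma telesc L m :
  sum_f_R0 (fun k => L ^ k / INR (fact k)) m - sum_f_R0 (fun k => L ^ (k + 1) / INR (k + 1) / INR (fact k)) m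
  = 1 - L ^ (S m) / INR (fact (S m)).
Proof.
  induction m as [|m IH].
  - simpl. field.
  - cbn [sum_f_R0].
    replace (sum_f_R0 (fun k : nat => L ^ k / INR (fact k)) m + L ^ S m / INR (fact (S m)) -
      (sum_f_R0 (fun k : nat => L ^ (k + 1) / INR (k + 1) / INR (fact k)) m + L ^ (S m + 1) / INR (S m + 1) / INR (fact (S m))))
      with ((sum_f_R0 (fun k : nat => L ^ k / INR (fact k)) m -
      sum_f_R0 (fun k : nat => L ^ (k + 1) / INR (k + 1) / INR (fact k)) m) + L ^ S m / INR (fact (S m))
      - L ^ (S m + 1) / INR (S m + 1) / INR (fact (S m))) by ring.
    rewrite IH. rewrite Nat.add_1_r.
    change (fact (S (S m))) with (S (S m) * fact (S m))%nat. rewrite mult_INR.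
    assert (INR (fact (S m)) <> 0) by apply INR_fact_neq_0.
    assert (INR (S (S m)) <> 0) by (apply not_0_INR; lia).
    field. auto.
Qed.

Lemma RInt_IC_sig m n :
  RInt (IC m) 1 (INR (S n)) = INR (fact m) - INR (fact m) * sum_f_R0 (fun k => stseq k n / INR (fact k)) m.
Proof.
  rewrite RInt_IC. set (x := INR (S n)). assert (Hx : 0 < x) by (apply lt_0_INR; lia).
  assert (HF : sum_f_R0 (fun i => Pc 2 m (INR (S i))) n = - INR (fact m) * sum_f_R0 (fun k => Ssum k n / INR (fact k)) m).
  { transitivity (sum_f_R0 (fun i => sum_f_R0 (fun k => - INR (fact m) * (ln (INR (i + 1)) ^ k / INR (i + 1) / INR (fact k))) m) n).
    { apply sum_eq. intros i _. rewrite Nat.add_1_r. rewrite Pc2_closed by (apply lt_0_INR; lia).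
      rewrite scal_sum. apply sum_eq. intros k _. field. repeat split; first [apply INR_fact_neq_0 | apply not_0_INR; lia | lra]. }
    rewrite sum_swap. rewrite scal_sum. apply sum_eq. intros k _. unfold Ssum.
    transitivity ((- INR (fact m) / INR (fact k)) * sum_f_R0 (fun j => ln (INR (j + 1)) ^ k / INR (j + 1)) n).
    { rewrite scal_sum. apply sum_eq. intros; field. split. apply INR_fact_neq_0. apply not_0_INR; lia. }
    field. apply INR_fact_neq_0. }
  assert (HS : sum_f_R0 (fun k => stseq k n / INR (fact k)) m =
     sum_f_R0 (fun k => Ssum k n / INR (fact k)) m - sum_f_R0 (fun k => ln x ^ (k + 1) / INR (k + 1) / INR (fact k)) m).
  { rewrite <- minus_sum. apply sum_eq. intros k _. unfold stseq, x. rewrite Nat.add_1_r. field.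
    split. apply not_0_INR; lia. apply INR_fact_neq_0. }
  rewrite HF, HS. rewrite Pc2_closed by auto.
  pose proof (telesc (ln x) m) as T.
  unfold Qm.
  change (fact (S m)) with (S m * fact m)%nat in T. rewrite mult_INR in T.
  assert (INR (fact m) <> 0) by apply INR_fact_neq_0.
  assert (INR (S m) <> 0) by (apply not_0_INR; lia).
  assert (E : sum_f_R0 (fun k => ln x ^ (k + 1) / INR (k + 1) / INR (fact k)) m =
     sum_f_R0 (fun k => ln x ^ k / INR (fact k)) m - 1 + ln x ^ S m / (INR (S m) * INR (fact m))) by lra.
  rewrite E. toR. field. split; auto. lra.
Qed.

Definition Tprev (T : nat -> R) (k : nat) := match k with O => 0 | S j => T j end.

Lemma stieltjes_sum (T : nat -> R) :
  (forall m, is_lim_seq (fun n => sum_f_R0 (fun k => stseq k n / INR (fact k)) m) (T m)) ->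
  forall m, sum_f_R0 (fun k => stieltjes k / INR (fact k)) m = T m.
Proof.
  intros HT.
  assert (Hk : forall k, stieltjes k = INR (fact k) * (T k - Tprev T k)).
  { intros k. unfold stieltjes.
    assert (L : is_lim_seq (stseq k) (INR (fact k) * (T k - Tprev T k))).
    { destruct k as [|j].
      - replace (INR (fact 0) * (T 0%nat - Tprev T 0)) with (T 0%nat) by (simpl; ring).
        eapply is_lim_seq_ext; [|apply (HT 0%nat)]. intros n. simpl. field.
      - assert (H := is_lim_seq_minus' _ _ _ _ (HT (S j)) (HT j)).
        assert (H2 := is_lim_seq_scal_l _ (INR (fact (S j))) _ H). cbn [Rbar_mult Rbar_mult'] in H2. cbn [Tprev].
        eapply is_lim_seq_ext; [|exact H2]. intros n. cbn [sum_f_R0].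
        field_simplify. reflexivity. apply INR_fact_neq_0. }
    change (fun n : nat => sum_f_R0 (fun j : nat => ln (INR (j + 1)) ^ k / INR (j + 1)) n - ln (INR (n + 1)) ^ (k + 1) / INR (k + 1)) with (stseq k).
    rewrite (is_lim_seq_unique _ _ L). reflexivity. }
  induction m as [|m IH].
  - simpl. rewrite Hk. simpl. field.
  - cbn [sum_f_R0]. rewrite IH, Hk. simpl Tprev. field. apply INR_fact_neq_0.
Qed.

Definition gfun (y : R) := y ^ 2 - y + 1 / 6.
Definition IA (k : nat) (x : R) := gfun (frac_part x) * (ln x ^ k / x ^ 2).
Definition Aval (k : nat) := int_1_inf (IA k).
Definition acoef (k : nat) := (-1) ^ k * Aval k / INR (fact k).
Definition JI (s : R) (x : R) := (frac_part x ^ 2 - frac_part x + 1 / 6) * Rpower x (- s - 2).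

Lemma gfun_bnd y : 0 <= y < 1 -> Rabs (gfun y) <= 1 / 6.
Proof. intros H. apply abs_le_intro. unfold gfun. split; nra. Qed.

Lemma gfun_cont y : continuous gfun y.
Proof. apply cont_of_derive. unfold gfun. auto_derive. auto. Qed.

Lemma ilim_IA k : ilim (IA k) (Aval k).
Proof.
  destruct (ilim_frac_exists gfun (1/6) k gfun_cont gfun_bnd) as [l Hl].
  assert (Hl' : ilim (IA k) l) by exact Hl.
  unfold Aval. rewrite (ilim_int _ _ Hl'). exact Hl'.
Qed.

Lemma ln_ge0 x : 1 <= x -> 0 <= ln x.
Proof. intros; rewrite <- ln_1; apply ln_le; lra. Qed.

Lemma Aval_bnd k : Rabs (Aval k) <= 1 / 6 * INR (fact k).
Proof.
  replace (1 / 6 * INR (fact k)) with (1/6 * (INR (fact k) / (2 - 1) ^ S k)) by (replace (2-1) with 1 by ring; rewrite pow1; field).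
  apply ilim_abs_le with (IA k) (fun x => 1/6 * (ln x ^ k * exp (- 2 * ln x))).
  - intros x Hx. unfold IA. rewrite exp_m2 by lra. rewrite Rabs_mult.
    assert (0 <= ln x ^ k / x ^ 2).
    { unfold Rdiv. apply Rmult_le_pos. apply pow_le, ln_ge0; auto. left; apply Rinv_0_lt_compat, pow_lt; lra. }
    rewrite (Rabs_right (ln x ^ k / x ^ 2)) by lra.
    unfold Rdiv in *. apply Rmult_le_compat_r; auto. apply gfun_bnd, frac_bnd.
  - apply ilim_IA.
  - apply ilim_scal. apply ilim_powlog. lra.
Qed.

Lemma acoef_bnd k : Rabs (acoef k) <= 1 / 6.
Proof.
  unfold acoef. unfold Rdiv. rewrite Rabs_mult, Rabs_mult, pow_1_abs, Rmult_1_l.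
  rewrite Rabs_Rinv by apply INR_fact_neq_0. rewrite (Rabs_right (INR (fact k))) by (apply Rle_ge, pos_INR).
  pose proof (Aval_bnd k). pose proof (INR_fact_lt_0 k).
  apply Rmult_le_reg_r with (INR (fact k)); auto. rewrite Rmult_assoc, Rinv_l by lra. lra.
Qed.

Definition Tk (s : R) (K : nat) (x : R) := sum_f_R0 (fun k => (- s * ln x) ^ k / INR (fact k)) K.

Lemma JI_eq s x : 0 < x -> JI s x = gfun (frac_part x) * (exp (- s * ln x) / x ^ 2).
Proof.
  intros Hx. unfold JI, Rpower, gfun. f_equal.
  replace ((- s - 2) * ln x) with (- s * ln x + -2 * ln x) by ring.
  rewrite exp_plus, exp_m2 by auto. reflexivity.
Qed.

Lemma ex_JI s b : 1 <= b -> ex_RInt (JI s) 1 b.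
Proof.
  intros Hb. apply (ex_frac gfun (fun x => Rpower x (- s - 2))); auto.
  - apply gfun_cont.
  - intros x Hx. apply cont_of_derive. unfold Rpower. auto_derive. lra.
Qed.

Lemma JI_exists s : Rabs s <= 1/4 -> exists l, ilim (JI s) l.
Proof.
  intros Hs.
  apply ilim_exists with (fun x => 1/6 * (ln x ^ 0 * exp (- (s + 2) * ln x))) (1/6 * (INR (fact 0) / (s + 2 - 1) ^ S 0)).
  - apply ex_JI.
  - intros x Hx. unfold JI. rewrite Rabs_mult. simpl (ln x ^ 0). rewrite Rmult_1_l.
    unfold Rpower. rewrite (Rabs_right (exp _)) by (left; apply exp_pos).
    replace (- (s + 2) * ln x) with ((- s - 2) * ln x) by ring.
    apply Rmult_le_compat_r. left; apply exp_pos. apply (gfun_bnd _ (frac_bnd x)).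
  - apply ilim_scal. apply ilim_powlog. apply abs_le_inv in Hs. lra.
Qed.

Lemma pow_opp_mult (s : R) k : (- s) ^ k = (-1) ^ k * s ^ k.
Proof. rewrite <- Rpow_mult_distr. f_equal; ring. Qed.

Lemma ilim_partial s K :
  ilim (fun x => gfun (frac_part x) * (Tk s K x / x ^ 2)) (sum_f_R0 (fun k => acoef k * s ^ k) K).
Proof.
  induction K as [|K IH].
  - apply ilim_ext with (IA 0).
    + intros x Hx. unfold IA, Tk. simpl. field. lra.
    + replace (sum_f_R0 (fun k => acoef k * s ^ k) 0) with (Aval 0) by (unfold acoef; simpl; field).
      apply ilim_IA.
  - assert (H := ilim_plus _ _ _ _ IH (ilim_scal _ ((- s) ^ S K / INR (fact (S K))) _ (ilim_IA (S K)))).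
    assert (Hf : INR (fact (S K)) <> 0) by apply INR_fact_neq_0.
    replace (sum_f_R0 (fun k => acoef k * s ^ k) (S K)) with
      (sum_f_R0 (fun k => acoef k * s ^ k) K + (- s) ^ S K / INR (fact (S K)) * Aval (S K)).
    2: { cbn [sum_f_R0]. f_equal. unfold acoef. rewrite pow_opp_mult. field. auto. }
    apply ilim_ext with (2 := H). intros x Hx. unfold IA, Tk. cbn [sum_f_R0].
    rewrite Rpow_mult_distr. field. split; auto. lra.
Qed.

Lemma JI_rem_bnd s K x : Rabs s <= 1/4 -> 1 <= x ->
  Rabs (JI s x - gfun (frac_part x) * (Tk s K x / x ^ 2)) <=
  1/6 * (Rabs s ^ S K / INR (fact (S K)) * (ln x ^ S K * exp (- (2 - Rabs s) * ln x))).
Proof.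
  intros Hs Hx. rewrite JI_eq by lra.
  assert (Hl : 0 <= ln x) by (apply ln_ge0; auto).
  set (y := - s * ln x).
  replace (gfun (frac_part x) * (exp y / x ^ 2) - gfun (frac_part x) * (Tk s K x / x ^ 2))
    with (gfun (frac_part x) * ((exp y - Tk s K x) * / x ^ 2)) by (field; lra).
  assert (Hy : Rabs y = Rabs s * ln x).
  { unfold y. rewrite Rabs_mult, Rabs_Ropp, (Rabs_right (ln x)); auto. lra. }
  assert (E : exp (- (2 - Rabs s) * ln x) = exp (Rabs y) * / x ^ 2).
  { rewrite Hy, <- exp_m2 by lra. rewrite <- exp_plus. f_equal. ring. }
  rewrite E. rewrite Rabs_mult, Rabs_mult. rewrite (Rabs_right (/ x ^ 2)).
  2: { left. apply Rinv_0_lt_compat, pow_lt; lra. }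
  assert (Hr := exp_rem y K). unfold Tk. fold y.
  assert (HB : Rabs y ^ S K = Rabs s ^ S K * ln x ^ S K) by (rewrite Hy; apply Rpow_mult_distr).
  rewrite HB in Hr.
  assert (0 <= / x ^ 2) by (left; apply Rinv_0_lt_compat, pow_lt; lra).
  assert (0 <= Rabs (exp y - sum_f_R0 (fun k : nat => y ^ k / INR (fact k)) K)) by apply Rabs_pos.
  replace (1 / 6 * (Rabs s ^ S K / INR (fact (S K)) * (ln x ^ S K * (exp (Rabs y) * / x ^ 2))))
    with (1 / 6 * ((Rabs s ^ S K * ln x ^ S K / INR (fact (S K)) * exp (Rabs y)) * / x ^ 2)) by (field; split; [lra | apply INR_fact_neq_0]).
  rewrite <- Rmult_assoc. rewrite <- (Rmult_assoc (1/6)).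
  apply Rmult_le_compat_r; auto.
  apply Rmult_le_compat; auto. apply Rabs_pos. apply gfun_bnd, frac_bnd.
Qed.

Lemma J_pseries s : Rabs s <= 1/4 -> is_pseries acoef s (int_1_inf (JI s)).
Proof.
  intros Hs. destruct (JI_exists s Hs) as [l Hl]. rewrite (ilim_int _ _ Hl).
  assert (Hs0 := Rabs_pos s).
  set (q := Rabs s / (1 - Rabs s)).
  assert (Hq : Rabs q < 1).
  { unfold q. rewrite Rabs_right. apply Rmult_lt_reg_r with (1 - Rabs s). lra.
    unfold Rdiv. rewrite Rmult_assoc, Rinv_l by lra. lra.
    apply Rle_ge. apply Rdiv_le_0_compat; lra. }
  set (eps := fun K : nat => 1 / 6 / (1 - Rabs s) * q ^ S K).
  assert (Hb : forall K, Rabs (l - sum_f_R0 (fun k => acoef k * s ^ k) K) <= eps K).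
  { intros K.
    assert (Hv : eps K = 1/6 * (Rabs s ^ S K / INR (fact (S K)) * (INR (fact (S K)) / (2 - Rabs s - 1) ^ S (S K)))).
    { unfold eps, q. replace (2 - Rabs s - 1) with (1 - Rabs s) by ring.
      unfold Rdiv. rewrite Rpow_mult_distr, pow_inv.
      assert ((1 - Rabs s) ^ S K <> 0) by (apply pow_nonzero; lra).
      replace ((1 - Rabs s) ^ S (S K)) with ((1 - Rabs s) * (1 - Rabs s) ^ S K) by (simpl; ring).
      field. repeat split; try lra; auto. apply INR_fact_neq_0. }
    rewrite Hv.
    apply ilim_abs_le with (fun x => JI s x - gfun (frac_part x) * (Tk s K x / x ^ 2))
      (fun x => 1/6 * (Rabs s ^ S K / INR (fact (S K)) * (ln x ^ S K * exp (- (2 - Rabs s) * ln x)))).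
    - intros x Hx. now apply JI_rem_bnd.
    - apply ilim_minus; auto. apply ilim_partial.
    - apply ilim_scal, ilim_scal, ilim_powlog. lra. }
  assert (He : is_lim_seq eps 0).
  { unfold eps. replace 0 with (1 / 6 / (1 - Rabs s) * 0) by ring.
    apply (is_lim_seq_scal_l _ (1 / 6 / (1 - Rabs s)) 0).
    apply (is_lim_seq_incr_1 (fun K => q ^ K) 0). now apply is_lim_seq_geom. }
  assert (HP : is_lim_seq (fun K => sum_f_R0 (fun k => acoef k * s ^ k) K) l).
  { apply is_lim_seq_le_le with (fun K => l - eps K) (fun K => l + eps K).
    - intros K. specialize (Hb K). apply abs_le_inv in Hb. lra.
    - replace (Finite l) with (Rbar_minus l 0) by (simpl; f_equal; ring).
      apply is_lim_seq_minus'. apply is_lim_seq_const. exact He.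
    - replace (Finite l) with (Rbar_plus l 0) by (simpl; f_equal; ring).
      apply is_lim_seq_plus'. apply is_lim_seq_const. exact He. }
  assert (HL : is_lim_seq (sum_n (fun k => scal (pow_n s k) (acoef k))) l).
  { eapply is_lim_seq_ext; [|exact HP]. intros K. rewrite sum_n_Reals. apply sum_eq.
    intros i _. unfold scal; simpl. unfold mult; simpl. rewrite (pow_n_pow s i). ring. }
  exact HL.
Qed.

Definition zc (k : nat) : R :=
  match k with
  | O => -1 + 1/2
  | S O => -1 + 1/12 - acoef 0 / 2
  | S (S j) => -1 - (acoef (S j) + acoef j) / 2
  end.

Definition d0 (x : R) (k : nat) : R := match k with O => x | _ => 0 end.

Lemma is_pseries_d0 x s : is_pseries (d0 x) s x.
Proof.
  unfold is_pseries, is_series.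
  assert (H : is_lim_seq (sum_n (fun k => scal (pow_n s k) (d0 x k))) x).
  { apply is_lim_seq_ext with (fun _ => x); [|apply is_lim_seq_const].
    intros N. rewrite sum_n_Reals. induction N as [|N IH].
    - simpl. unfold scal; simpl. unfold mult, one; simpl. ring.
    - cbn [sum_f_R0]. rewrite <- IH. unfold scal; simpl. unfold mult, one; simpl. ring. }
  exact H.
Qed.

Lemma is_pseries_ones s : Rabs s < 1 -> is_pseries (fun _ => 1) s (/ (1 - s)).
Proof.
  intros Hs. unfold is_pseries.
  apply is_series_ext with (fun n => s ^ n).
  - intros n. change (scal (pow_n s n) 1) with (pow_n s n * 1). rewrite Rmult_1_r. symmetry. apply pow_n_pow.
  - now apply is_series_geom.
Qed.

Lemma is_pseries_eqv (a : nat -> R) s l1 l2 : is_pseries a s l1 -> l1 = l2 -> is_pseries a s l2.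
Proof. intros H <-; exact H. Qed.

Lemma zeta_pseries s : Rabs s <= 1/4 -> is_pseries zc s (zeta s).
Proof.
  intros Hs.
  assert (Hs1 : Rabs s < 1) by lra.
  assert (HJ := J_pseries s Hs).
  set (J := int_1_inf (JI s)) in HJ.
  assert (H1 := is_pseries_scal (-1) _ s _ (Rmult_comm _ _) (is_pseries_ones s Hs1)).
  assert (H2 := is_pseries_plus _ _ s _ _ H1 (is_pseries_d0 (1/2) s)).
  assert (H3 := is_pseries_plus _ _ s _ _ H2 (is_pseries_incr_1 _ s _ (is_pseries_d0 (1/12) s))).
  assert (HJ1 := is_pseries_incr_1 _ s _ HJ).
  assert (HJ2 := is_pseries_incr_1 _ s _ HJ1).
  assert (H4 := is_pseries_plus _ _ s _ _ HJ1 HJ2).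
  assert (H5 := is_pseries_scal (-1/2) _ s _ (Rmult_comm _ _) H4).
  assert (H6 := is_pseries_plus _ _ s _ _ H3 H5).
  apply is_pseries_ext with (b := zc) in H6.
  - eapply is_pseries_eqv; [exact H6|].
    unfold zeta. fold (JI s). fold J.
    unfold plus, scal; simpl. unfold mult; simpl.
    apply abs_le_inv in Hs.
    field. lra.
  - intros k. destruct k as [|[|j]]; unfold PS_plus, PS_scal, PS_incr_1, d0, zc;
      unfold plus, scal, zero; simpl; unfold mult; simpl; toR; field.
Qed.

Lemma zc_bnd k : Rabs (zc k) <= 2.
Proof.
  destruct k as [|[|j]]; unfold zc.
  - apply abs_le_intro; lra.
  - pose proof (acoef_bnd 0) as H. apply abs_le_inv in H. apply abs_le_intro; lra.
  - pose proof (acoef_bnd j) as H. pose proof (acoef_bnd (S j)) as H'.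
    apply abs_le_inv in H. apply abs_le_inv in H'. apply abs_le_intro; lra.
Qed.

Lemma zc_radius : Rbar_lt 0 (CV_radius zc).
Proof.
  destruct (CV_radius_bounded zc) as [Hub _].
  assert (H1 : Rbar_le 1 (CV_radius zc)).
  { apply Hub. exists 2. intros n. rewrite pow1, Rmult_1_r. apply zc_bnd. }
  destruct (CV_radius zc) as [r| |]; simpl in *; auto; lra.
Qed.

Lemma Derive_n_zeta k : Derive_n zeta k 0 = zc k * INR (fact k).
Proof.
  rewrite (Derive_n_ext_loc zeta (PSeries zc) k 0).
  - apply Derive_n_coef. apply zc_radius.
  - assert (Hp : 0 < 1/4) by lra.
    exists (mkposreal _ Hp). intros t Ht. change (Rabs (t - 0) < 1/4) in Ht.
    rewrite Rminus_0_r in Ht. symmetry. apply is_pseries_unique. apply zeta_pseries. lra.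
Qed.

Lemma zc_sum m :
  sum_f_R0 (fun k => (-1) ^ k * zc k) (S m) = - (1 - (-1) ^ m) / 2 + 5 / 12 + (-1) ^ m * acoef m / 2.
Proof.
  induction m as [|m IH].
  - simpl. field.
  - cbn [sum_f_R0]. cbn [sum_f_R0] in IH. rewrite IH. unfold zc. simpl. field.
Qed.

Lemma acoef_sign m : (-1) ^ m * acoef m = Aval m / INR (fact m).
Proof.
  unfold acoef.
  assert (H1 : (-1) ^ m * (-1) ^ m = 1).
  { rewrite <- Rpow_mult_distr. replace (-1 * -1) with 1 by ring. apply pow1. }
  transitivity ((-1) ^ m * (-1) ^ m * (Aval m / INR (fact m))).
  field. apply INR_fact_neq_0. rewrite H1; ring.
Qed.

Lemma ilim_IC m : ilim (IC m) (int_1_inf (IC m)).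
Proof.
  destruct (ilim_frac_exists (fun y => y) 1 m) as [l Hl].
  - intros; apply continuous_id.
  - intros y Hy. apply abs_le_intro. lra.
  - assert (Hl' : ilim (IC m) l) by exact Hl. rewrite (ilim_int _ _ Hl'). exact Hl'.
Qed.

Lemma stieltjes_val m :
  sum_f_R0 (fun k => stieltjes k / INR (fact k)) m = 1 - int_1_inf (IC m) / INR (fact m).
Proof.
  apply (stieltjes_sum (fun m => 1 - int_1_inf (IC m) / INR (fact m))). clear m. intros m.
  assert (H := ilim_seq _ _ (ilim_IC m)).
  apply is_lim_seq_incr_1 in H.
  assert (Hf : INR (fact m) <> 0) by apply INR_fact_neq_0.
  assert (H2 := is_lim_seq_scal_l _ (- / INR (fact m)) _ H).
  assert (H3 := is_lim_seq_plus' _ _ _ _ (is_lim_seq_const 1) H2).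
  eapply is_lim_seq_ext; [|replace (1 - int_1_inf (IC m) / INR (fact m)) with (1 + - / INR (fact m) * int_1_inf (IC m)) by (field; auto); exact H3].
  intros n. cbv beta. rewrite RInt_IC_sig. field. auto.
Qed.

Theorem theorem3p1 (m : nat) :
  / INR (fact m) * int_1_inf (fun x => frac_part x ^ 2 * ln x ^ m / x ^ 2)
  = 1 - (-1) ^ m
    + 2 * sum_f_R0 (fun k => (-1) ^ k * Derive_n zeta k 0 / INR (fact k)) (m + 1)
    - sum_f_R0 (fun k => stieltjes k / INR (fact k)) m.
Proof.
  rewrite (sum_eq _ (fun k => (-1) ^ k * zc k)).
  2: { intros k _. rewrite Derive_n_zeta. field. apply INR_fact_neq_0. }
  rewrite Nat.add_1_r, zc_sum, acoef_sign, stieltjes_val.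
  assert (HB : int_1_inf (fun x => frac_part x ^ 2 * ln x ^ m / x ^ 2) =
               Aval m + int_1_inf (IC m) - 1/6 * (INR (fact m) / (2 - 1) ^ S m)).
  { apply ilim_int.
    apply ilim_ext with (fun x => (IA m x + IC m x) - 1/6 * (ln x ^ m * exp (-2 * ln x))).
    - intros x Hx. unfold IA, IC, gfun. rewrite exp_m2 by lra. field. lra.
    - apply ilim_minus. apply ilim_plus. apply ilim_IA. apply ilim_IC.
      apply ilim_scal. apply ilim_powlog. lra. }
  rewrite HB. replace (2 - 1) with 1 by ring. rewrite pow1.
  field. apply INR_fact_neq_0.
Qed.
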